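(* For $k\geq 0$ let $\mathcal{E}_k(x)=\sum_{n=1}^{\infty}e(n)^{k}x^n$ (with $0^0=1$). Then $\mathcal{E}_0(x)=\frac{x}{1-x}$, and for every $k\geq 1$, $$\mathcal{E}_k(x)-\mathcal{E}_k(x^2)-\frac{x^2+1}{x}\,\mathcal{E}_k(x^4)=\sum_{j=0}^{k-1}C(k,j)\left(\mathcal{E}_j(x^2)+\frac{x^2+1}{x}\,\mathcal{E}_j(x^4)\right),$$ where $C(k,j)=\binom{k}{j}$.
   Context: The Stern polynomials $B_n(t)\in\mathbb{Z}[t]$ are defined by $B_0(t)=0$, $B_1(t)=1$, and for $n\geq 1$: $B_{2n}(t)=tB_n(t)$, $B_{2n+1}(t)=B_n(t)+B_{n+1}(t)$. For $n\geq1$ let $e(n)=\deg B_n(t)$. *)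

(* Defs.v *)
(* Formal power series are represented by their coefficient
   sequences  nat -> int  (coefficient of x^n at index n). *)
From HB Require Import structures.
From mathcomp Require Import all_boot all_order all_algebra.
Set Implicit Arguments. Unset Strict Implicit. Unset Printing Implicit Defensive.
Import GRing.Theory Num.Theory.
Local Open Scope ring_scope.

(* Stern polynomials, computed with fuel: stern_fuel f n = B_n whenever n <= f. *)
Fixpoint stern_fuel (f n : nat) : {poly int} :=
  match f with
  | 0 => 0
  | f'.+1 =>
      if n == 0%N then 0
      else if n == 1%N then 1
      else if odd n then stern_fuel f' n./2 + stern_fuel f' (n./2).+1
      else 'X * stern_fuel f' n./2
  end.

Definition stern (n : nat) : {poly int} := stern_fuel n n.

(* e(n) = deg B_n(t)  (size = degree + 1). *)
Definition e (n : nat) : nat := (size (stern n)).-1.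

Definition series := nat -> int.

(* E_k(x) = sum_{n>=1} e(n)^k x^n  (with 0^0 = 1, as for expn). *)
Definition E (k : nat) : series :=
  fun n => if n == 0%N then 0 else ((e n ^ k)%N)%:Z.

Definition x_over_1mx : series := fun n => if n == 0%N then 0 else 1.

Definition subst_pow (d : nat) (a : series) : series :=
  fun m => if (d %| m)%N then a (m %/ d)%N else 0.

(* A(x) |-> ((x^2+1)/x) A(x) = x A(x) + A(x)/x ; this is a power series
   when A has zero constant term (which is the case for A = E_j(x^4)). *)
Definition mul_xpxinv (a : series) : series :=
  fun m => a m.+1 + (if m is m'.+1 then a m' else 0).

(* Main.v *)
Require Import Defs.
From HB Require Import structures.
From mathcomp Require Import all_boot all_order all_algebra zify.
Import GRing.Theory Num.Theory.
Local Open Scope ring_scope.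

Lemma fuel_eq f g n : (n <= f)%N -> (n <= g)%N -> stern_fuel f n = stern_fuel g n.
Proof.
elim: f g n => [|f IH] [|g] n /=.
- by [].
- by rewrite leqn0 => /eqP ->.
- by move=> _; rewrite leqn0 => /eqP ->.
move=> hf hg.
case: ifP => // n0; case: ifP => // n1.
move/negbT/eqP: n0 => n0; move/negbT/eqP: n1 => n1.
have h := odd_double_half n; rewrite -addnn in h.
case: ifP => on; rewrite on /= in h.
- by congr (_ + _); apply: IH; lia.
- by congr (_ * _); apply: IH; lia.
Qed.

Lemma stern_unfold n : stern n =
  if n == 0%N then 0 else if n == 1%N then 1
  else if odd n then stern n./2 + stern (n./2).+1 else 'X * stern n./2.
Proof.
rewrite {1}/stern (@fuel_eq n n.+1 n) // [LHS]/=.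
case: ifP => // n0; case: ifP => // n1.
move/negbT/eqP: n0 => n0; move/negbT/eqP: n1 => n1.
have h := odd_double_half n; rewrite -addnn in h.
rewrite /stern.
case: ifP => on; rewrite on /= in h.
- by rewrite (@fuel_eq n n./2 n./2) ?(@fuel_eq n (n./2).+1 (n./2).+1) //; lia.
- by rewrite (@fuel_eq n n./2 n./2) //; lia.
Qed.

Lemma stern_even n : (0 < n)%N -> stern (2 * n) = 'X * stern n.
Proof.
move=> n0; rewrite stern_unfold mul2n odd_double doubleK.
have -> : (n.*2 == 0%N) = false by apply/negbTE; rewrite -!addnn; lia.
have -> : (n.*2 == 1%N) = false by apply/negbTE; rewrite -!addnn; lia.
by [].
Qed.

Lemma stern_odd n : stern (2 * n + 1) = stern n + stern n.+1.
Proof.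
rewrite stern_unfold.
have -> : (2 * n + 1 == 0)%N = false by apply/negbTE; lia.
case: (posnP n) => [->|n0].
  by rewrite /= /stern /= add0r.
have -> : (2 * n + 1 == 1)%N = false by apply/negbTE; lia.
rewrite addn1 mul2n /= odd_double /= uphalf_double //.
Qed.

Definition nn (p : {poly int}) := forall i, 0 <= p`_i.

Lemma size_add_le p q : nn p -> nn q -> (size p <= size (p + q)%R)%N.
Proof.
move=> Hp Hq.
case: (posnP (size p)) => [->//|sp].
have pn0 : p != 0 by rewrite -size_poly_gt0.
have l : p`_(size p).-1 != 0 by move: pn0; rewrite -lead_coef_eq0.
have H : (p + q)`_(size p).-1 != 0.
  rewrite coefD; apply/eqP; move: (Hq (size p).-1) (Hp (size p).-1) l.
  move=> a b /eqP c; lia.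
case: (leqP (size p) (size (p+q)%R)) => // hlt.
have : (size (p+q)%R <= (size p).-1)%N by lia.
move/leq_sizeP => /(_ _ (leqnn _)) Z.
by rewrite Z eqxx in H.
Qed.

Lemma size_add_nn p q : nn p -> nn q -> size (p + q) = maxn (size p) (size q).
Proof.
move=> Hp Hq; apply/anti_leq; rewrite size_add /= geq_max size_add_le //.
by rewrite addrC size_add_le.
Qed.

Lemma stern_props n : nn (stern n) /\ ((0 < n)%N -> stern n != 0).
Proof.
elim/ltn_ind: n => n IH; rewrite stern_unfold.
case: eqP => [->|/eqP n0]; first by split; [move=> i; rewrite coef0|].
case: eqP => [_|/eqP n1]; first by split; [move=> i; rewrite coef1; case: (i == 0%N)|rewrite oner_neq0].
have h := odd_double_half n; rewrite -addnn in h.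
case: ifP => on; rewrite on /= in h.
- have [A1 A2] := IH n./2 ltac:(lia).
  have [B1 B2] := IH (n./2).+1 ltac:(lia).
  split.
    by move=> i; rewrite coefD addr_ge0.
  move=> _; rewrite -size_poly_gt0 size_add_nn // leq_max.
  by rewrite !size_poly_gt0 B2 ?orbT.
- have [A1 A2] := IH n./2 ltac:(lia).
  split.
    by move=> i; rewrite coefXM; case: (i == 0%N).
  by move=> _; rewrite mulf_neq0 ?polyX_eq0 // A2 //; lia.
Qed.

Lemma e_even n : (0 < n)%N -> e (2 * n) = (e n).+1.
Proof.
move=> n0; rewrite /e stern_even // mulrC size_mulX; last by apply: (stern_props n).2.
have : (0 < size (stern n))%N by rewrite size_poly_gt0; apply: (stern_props n).2.
lia.
Qed.

Lemma e_odd n : e (2 * n + 1) = maxn (e n) (e n.+1).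
Proof.
rewrite /e stern_odd size_add_nn; try apply: (stern_props _).1.
lia.
Qed.

Lemma e0 : e 0 = 0%N. Proof. by rewrite /e /stern /= size_poly0. Qed.
Lemma e1 : e 1 = 0%N. Proof. by rewrite /e /stern /= size_poly1. Qed.

Lemma e_lip n : (e n.+1 <= (e n).+1 /\ e n <= (e n.+1).+1)%N.
Proof.
elim/ltn_ind: n => n IH.
have h := odd_double_half n; rewrite -addnn in h.
case: (boolP (odd n)) => on; rewrite ?on /= ?(negbTE on) in h;
  move: h; move: (n./2) => j h.
- have [A1 A2] := IH j ltac:(lia).
  have E2 : n.+1 = (2 * j.+1)%N by lia.
  rewrite E2 e_even // -h.
  have -> : (1 + (j + j) = 2 * j + 1)%N by lia.
  rewrite e_odd; lia.
- case: (posnP j) => j0.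
    have -> : n = 0%N by lia.
    by rewrite e0 e1.
  have [A1 A2] := IH j ltac:(lia).
  have E2 : n.+1 = (2 * j + 1)%N by lia.
  rewrite E2 e_odd -h.
  have -> : (0 + (j + j) = 2 * j)%N by lia.
  rewrite e_even //; lia.
Qed.

Lemma e4n1 n : (0 < n)%N -> e (4 * n + 1) = (e n).+1.
Proof.
move=> n0; have -> : (4 * n + 1 = 2 * (2 * n) + 1)%N by lia.
rewrite e_odd e_even ?muln_gt0 // -(addn1 (2 * n)) e_odd.
have := e_lip n; lia.
Qed.

Lemma e4n3 n : e (4 * n + 3) = (e n.+1).+1.
Proof.
have -> : (4 * n + 3 = 2 * (2 * n + 1) + 1)%N by lia.
rewrite e_odd e_odd.
have -> : (2 * n + 1).+1 = (2 * n.+1)%N by lia.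
rewrite e_even //.
have := e_lip n; lia.
Qed.

Lemma binom_sum (a k : nat) :
  \sum_(j < k) ('C(k, j))%:R * ((a ^ j)%N)%:Z = ((a.+1 ^ k)%N)%:Z - ((a ^ k)%N)%:Z.
Proof.
have H := Pascal 1 a k.
rewrite add1n in H.
rewrite H big_ord_recr /= binn mul1n subnn expn0 mul1n PoszD addrK.
rewrite -natz natr_sum; apply: eq_bigr => j _.
rewrite exp1n mul1n natrM. match goal with |- ?g => idtac g end. by rewrite !natz.
Qed.

Definition T j m := subst_pow 2 (E j) m + mul_xpxinv (subst_pow 4 (E j)) m.

Lemma key k m (c : int) (a : nat) :
  (forall j, T j m = c * ((a ^ j)%N)%:Z) -> E k m = c * ((a.+1 ^ k)%N)%:Z ->
  E k m - subst_pow 2 (E k) m - mul_xpxinv (subst_pow 4 (E k)) m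
     = \sum_(j < k) ('C(k, j))%:R
          * (subst_pow 2 (E j) m + mul_xpxinv (subst_pow 4 (E j)) m).
Proof.
move=> HT HE.
rewrite -addrA -opprD -/(T k m) HT HE.
under eq_bigr => j _ do rewrite -/(T j m) HT mulrCA.
by rewrite -mulr_sumr binom_sum mulrBr.
Qed.

Lemma Epos j x : (0 < x)%N -> E j x = ((e x ^ j)%N)%:Z.
Proof. by rewrite /E; case: x. Qed.

Lemma mulS a m : mul_xpxinv a m.+1 = a m.+2 + a m. Proof. by []. Qed.

Lemma E0 j : E j 0 = 0. Proof. by []. Qed.

Theorem mainTheorem19 :
  (forall n : nat, E 0 n = x_over_1mx n) /\
  (forall k : nat, (1 <= k)%N -> forall m : nat,
     E k m - subst_pow 2 (E k) m - mul_xpxinv (subst_pow 4 (E k)) m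
     = \sum_(j < k) ('C(k, j))%:R
          * (subst_pow 2 (E j) m + mul_xpxinv (subst_pow 4 (E j)) m)).
Proof.
split; first by move=> n; rewrite /E /x_over_1mx expn0.
move=> k k1 m.
have h := odd_double_half m; rewrite -addnn in h.
move: h; move: (m./2) => n h.
case: (boolP (odd m)) => om; rewrite ?om /= ?(negbTE om) in h.
- have h2 := odd_double_half n; rewrite -addnn in h2.
  move: h2; move: (n./2) => q h2.
  case: (boolP (odd n)) => on; rewrite ?on /= ?(negbTE on) in h2.
  +
    have hm : m = (4 * q + 2).+1%N by lia.
    apply: (@key _ _ 1 (e q.+1)).
      move=> j; rewrite /T hm mulS /subst_pow.
      have -> : (2 %| (4 * q + 2).+1)%N = false by apply/negbTE/negP; lia.
      have -> : (4 %| (4 * q + 2).+2)%N = true by apply/idP; lia.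
      have -> : (4 %| (4 * q + 2))%N = false by apply/negbTE/negP; lia.
      have -> : ((4 * q + 2).+2 %/ 4 = q.+1)%N by lia.
      by rewrite Epos // add0r addr0 mul1r.
    have -> : m = (4 * q + 3)%N by lia.
    by rewrite Epos ?e4n3 ?mul1r //; lia.
  + have hm : m = (4 * q).+1%N by lia.
    have T0 : forall j, subst_pow 2 (E j) m + mul_xpxinv (subst_pow 4 (E j)) m = E j q.
      move=> j; rewrite hm mulS /subst_pow.
      have -> : (2 %| (4 * q).+1)%N = false by apply/negbTE/negP; lia.
      have -> : (4 %| (4 * q).+2)%N = false by apply/negbTE/negP; lia.
      have -> : (4 %| (4 * q))%N = true by apply/idP; lia.
      have -> : ((4 * q) %/ 4 = q)%N by lia.
      by rewrite add0r add0r.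
    case: (posnP q) => q0.
      apply: (@key _ _ 0 0).
        by move=> j; rewrite /T T0 q0 mul0r.
      by rewrite hm q0 muln0 Epos // e1 exp0n // mul0r.
    apply: (@key _ _ 1 (e q)).
      by move=> j; rewrite /T T0 Epos // mul1r.
    have -> : m = (4 * q + 1)%N by lia.
    by rewrite Epos ?e4n1 ?mul1r //; lia.
- case: (posnP n) => n0.
    have -> : m = 0%N by lia.
    apply: (@key _ _ 0 0); last by rewrite mul0r.
    by move=> j; rewrite mul0r.
  have hm : m = (2 * n.-1 + 1).+1%N by lia.
  apply: (@key _ _ 1 (e n)).
    move=> j; rewrite /T hm mulS /subst_pow.
    have -> : (2 %| (2 * n.-1 + 1).+1)%N = true by apply/idP; lia.
    have -> : (4 %| (2 * n.-1 + 1).+2)%N = false by apply/negbTE/negP; lia.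
    have -> : (4 %| (2 * n.-1 + 1))%N = false by apply/negbTE/negP; lia.
    have -> : ((2 * n.-1 + 1).+1 %/ 2 = n)%N by lia.
    by rewrite Epos // !addr0 mul1r.
  have -> : m = (2 * n)%N by lia.
  by rewrite Epos ?e_even ?mul1r //; lia.
Qed.
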